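(* Let $p,a,b,c,d$ be real constants, $\varphi(x)=(x-a)(x-b)(x-c)(x-d)$, and on an open domain of $(\lambda^1,\lambda^2,\lambda^3)$ where it is defined and non-degenerate consider the metric $$ds^2=\Big(1+p\sqrt{\lambda^1\lambda^2\lambda^3}\Big)^{-2}\Big[\frac{(\lambda^1-\lambda^2)(\lambda^1-\lambda^3)}{\varphi(\lambda^1)}(d\lambda^1)^2+\frac{(\lambda^2-\lambda^1)(\lambda^2-\lambda^3)}{\varphi(\lambda^2)}(d\lambda^2)^2+\frac{(\lambda^3-\lambda^1)(\lambda^3-\lambda^2)}{\varphi(\lambda^3)}(d\lambda^3)^2\Big].$$ Then the off-diagonal components of its Ricci tensor (in the coordinates $\lambda^i$) vanish identically, and the diagonal components of its Ricci tensor vanish identically if and only if $$p\,abcd=0\quad\text{and}\quad p^2(abc+abd+acd+bcd)=1.$$ *)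

(* Defs.v *)
From Stdlib Require Import Reals.
From Coquelicot Require Import Coquelicot.
Open Scope R_scope.

(** Points of the coordinate space R^3, coordinates (lambda^1, lambda^2, lambda^3)
    indexed 0,1,2. *)
Definition pt := (R * R * R)%type.

Definition coord (k : nat) (x : pt) : R :=
  match k with
  | 0%nat => fst (fst x)
  | 1%nat => snd (fst x)
  | _ => snd x
  end.

Definition upd (k : nat) (x : pt) (t : R) : pt :=
  match k with
  | 0%nat => (t, snd (fst x), snd x)
  | 1%nat => (fst (fst x), t, snd x)
  | _ => (fst (fst x), snd (fst x), t)
  end.

Definition partial (k : nat) (f : pt -> R) (x : pt) : R :=
  Derive (fun t => f (upd k x t)) (coord k x).

Definition sum3 (f : nat -> R) : R := f 0%nat + f 1%nat + f 2%nat.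

Definition metric := nat -> nat -> pt -> R.

Definition m3 (i : nat) : nat := Nat.modulo i 3.

Definition det3 (g : metric) (x : pt) : R :=
  sum3 (fun j => g 0%nat j x *
     (g 1%nat (m3 (j+1)) x * g 2%nat (m3 (j+2)) x
      - g 1%nat (m3 (j+2)) x * g 2%nat (m3 (j+1)) x)).

(** inverse metric g^{ij} (cofactor formula for a 3x3 matrix) *)
Definition ginv (g : metric) (i j : nat) (x : pt) : R :=
  (g (m3 (j+1)) (m3 (i+1)) x * g (m3 (j+2)) (m3 (i+2)) x
   - g (m3 (j+1)) (m3 (i+2)) x * g (m3 (j+2)) (m3 (i+1)) x) / det3 g x.

Definition christoffel (g : metric) (k i j : nat) (x : pt) : R :=
  / 2 * sum3 (fun l => ginv g k l x *
     (partial i (g j l) x + partial j (g i l) x - partial l (g i j) x)).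

Definition ricci (g : metric) (i j : nat) (x : pt) : R :=
  sum3 (fun k => partial k (christoffel g k i j) x)
  - sum3 (fun k => partial j (christoffel g k i k) x)
  + sum3 (fun k => sum3 (fun l =>
        christoffel g k k l x * christoffel g l i j x
        - christoffel g k j l x * christoffel g l i k x)).

Definition phi (a b c d : R) (t : R) : R := (t - a) * (t - b) * (t - c) * (t - d).

Definition confactor (p : R) (x : pt) : R :=
  / (1 + p * sqrt (coord 0 x * coord 1 x * coord 2 x)) ^ 2.

Definition gmet (p a b c d : R) : metric :=
  fun i j x =>
    if Nat.eqb i j then
      confactor p x *
      ((coord i x - coord (m3 (i+1)) x) * (coord i x - coord (m3 (i+2)) x)
       / phi a b c d (coord i x))
    else 0.

Definition open3 (U : pt -> Prop) : Prop :=
  forall x, U x -> exists eps, 0 < eps /\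
    forall y, (forall k, (k < 3)%nat -> Rabs (coord k y - coord k x) < eps) -> U y.

Definition admissible (p a b c d : R) (U : pt -> Prop) : Prop :=
  open3 U /\ (exists x, U x) /\
  forall x, U x ->
    0 < coord 0 x * coord 1 x * coord 2 x /\
    1 + p * sqrt (coord 0 x * coord 1 x * coord 2 x) <> 0 /\
    (forall k, (k < 3)%nat -> phi a b c d (coord k x) <> 0) /\
    coord 0 x <> coord 1 x /\ coord 0 x <> coord 2 x /\ coord 1 x <> coord 2 x.

(* Main.v *)
Require Import Defs.
From Stdlib Require Import Reals Lra Lia.
From Coquelicot Require Import Coquelicot.
Open Scope R_scope.

Definition dlt (i j : nat) : R := if Nat.eqb i j then 1 else 0.

Record DiagHyp (g : metric) (Dh : nat -> nat -> pt -> R)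
  (DDh : nat -> nat -> nat -> pt -> R) (U : pt -> Prop) : Prop := {
  dh_open : open3 U;
  dh_off : forall i j y, i <> j -> g i j y = 0;
  dh_nz : forall y, U y -> forall i, (i < 3)%nat -> g i i y <> 0;
  dh_D : forall y, U y -> forall m i, (m < 3)%nat -> (i < 3)%nat ->
     is_derive (fun t => g i i (upd m y t)) (coord m y) (Dh m i y);
  dh_DD : forall y, U y -> forall m n i, (m < 3)%nat -> (n < 3)%nat -> (i < 3)%nat ->
     is_derive (fun t => Dh n i (upd m y t)) (coord m y) (DDh m n i y)
}.

Definition Gam (g : metric) (Dh : nat -> nat -> pt -> R) k i j y :=
  / (2 * g k k y) * (dlt j k * Dh i k y + dlt i k * Dh j k y - dlt i j * Dh k i y).

Definition dGam (g : metric) Dh (DDh : nat -> nat -> nat -> pt -> R) m k i j y :=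
  (dlt j k * DDh m i k y + dlt i k * DDh m j k y - dlt i j * DDh m k i y) / (2 * g k k y)
  - (dlt j k * Dh i k y + dlt i k * Dh j k y - dlt i j * Dh k i y) * Dh m k y / (2 * (g k k y) ^ 2).

Definition RicD g Dh DDh i j y :=
  sum3 (fun k => dGam g Dh DDh k k i j y)
  - sum3 (fun k => dGam g Dh DDh j k i k y)
  + sum3 (fun k => sum3 (fun l =>
        Gam g Dh k k l y * Gam g Dh l i j y - Gam g Dh k j l y * Gam g Dh l i k y)).

Lemma upd_coord m y : (m < 3)%nat -> upd m y (coord m y) = y.
Proof. destruct y as [[u v] w]; destruct m as [|[|[|m]]]; simpl; auto; lia. Qed.

Lemma gam_deriv (fk f1 f2 f3 : R -> R) (d1 d2 d3 x dk e1 e2 e3 : R) :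
  is_derive fk x dk -> is_derive f1 x e1 -> is_derive f2 x e2 -> is_derive f3 x e3 ->
  fk x <> 0 ->
  is_derive (fun t => / (2 * fk t) * (d1 * f1 t + d2 * f2 t - d3 * f3 t)) x
   ((d1*e1 + d2*e2 - d3*e3) / (2 * fk x)
    - (d1 * f1 x + d2*f2 x - d3* f3 x) * dk / (2 * (fk x)^2)).
Proof.
  intros Hk H1 H2 H3 Hn.
  auto_derive.
  - repeat split; try (eexists; eassumption). lra.
  - replace (Derive (fun x0 : R => fk x0) x) with dk by (symmetry; apply is_derive_unique; exact Hk).
    replace (Derive (fun x0 : R => f1 x0) x) with e1 by (symmetry; apply is_derive_unique; exact H1).
    replace (Derive (fun x0 : R => f2 x0) x) with e2 by (symmetry; apply is_derive_unique; exact H2).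
    replace (Derive (fun x0 : R => f3 x0) x) with e3 by (symmetry; apply is_derive_unique; exact H3).
    field. auto.
Qed.

Section S.
Context (g : metric) (Dh : nat -> nat -> pt -> R) (DDh : nat -> nat -> nat -> pt -> R)
  (U : pt -> Prop) (H : DiagHyp g Dh DDh U).

Lemma partial_g l i j y : U y -> (l < 3)%nat -> (i < 3)%nat -> (j < 3)%nat ->
  partial l (g i j) y = dlt i j * Dh l i y.
Proof.
  intros Hy Hl Hi Hj. unfold dlt. destruct (Nat.eqb_spec i j).
  - subst. unfold partial. rewrite Rmult_1_l. apply is_derive_unique. exact (dh_D _ _ _ _ H y Hy l j Hl Hj).
  - unfold partial. rewrite (Derive_ext _ (fun _ => 0)).
    + rewrite Derive_const. ring.
    + intros t. apply (dh_off _ _ _ _ H). auto.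
Qed.

Ltac kill_off :=
  repeat match goal with |- context [g ?i ?j ?y] =>
    rewrite ((dh_off _ _ _ _ H) i j y) by lia end.

Lemma chr_Gam k i j y : U y -> (k < 3)%nat -> (i < 3)%nat -> (j < 3)%nat ->
  christoffel g k i j y = Gam g Dh k i j y.
Proof.
  intros Hy Hk Hi Hj.
  pose proof (dh_nz _ _ _ _ H y Hy 0 ltac:(lia)) as N0.
  pose proof (dh_nz _ _ _ _ H y Hy 1 ltac:(lia)) as N1.
  pose proof (dh_nz _ _ _ _ H y Hy 2 ltac:(lia)) as N2.
  unfold christoffel, Gam, sum3, ginv, det3, sum3.
  repeat rewrite partial_g by (try assumption; lia).
  destruct k as [|[|[|k]]]; try lia; destruct i as [|[|[|i]]]; try lia;
  destruct j as [|[|[|j]]]; try lia; unfold m3, dlt; simpl;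
  kill_off; field; auto.
Qed.

Lemma partial_chr m k i j x : U x -> (m < 3)%nat -> (k < 3)%nat -> (i < 3)%nat -> (j < 3)%nat ->
  partial m (christoffel g k i j) x = dGam g Dh DDh m k i j x.
Proof.
  intros Hx Hm Hk Hi Hj. unfold partial.
  rewrite (Derive_ext_loc _ (fun t => Gam g Dh k i j (upd m x t))).
  - apply is_derive_unique. unfold Gam, dGam.
    pose proof (gam_deriv (fun t => g k k (upd m x t)) (fun t => Dh i k (upd m x t))
      (fun t => Dh j k (upd m x t)) (fun t => Dh k i (upd m x t))
      (dlt j k) (dlt i k) (dlt i j) (coord m x) _ _ _ _
      (dh_D _ _ _ _ H x Hx m k Hm Hk)
      (dh_DD _ _ _ _ H x Hx m i k Hm Hi Hk)
      (dh_DD _ _ _ _ H x Hx m j k Hm Hj Hk)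
      (dh_DD _ _ _ _ H x Hx m k i Hm Hk Hi)) as P.
    cbv beta in P. rewrite !upd_coord in P by lia. apply P.
    apply (dh_nz _ _ _ _ H x Hx k Hk).
  - destruct (dh_open _ _ _ _ H x Hx) as [eps [Heps HU]].
    exists (mkposreal eps Heps). intros t Ht.
    change (Rabs (t - coord m x) < eps) in Ht.
    apply chr_Gam; auto. apply HU. intros kk Hkk.
    destruct x as [[u v] w].
    destruct m as [|[|[|m]]]; try lia; destruct kk as [|[|[|kk]]]; try lia; simpl in *;
    try (rewrite Rminus_eq_0, Rabs_R0; lra); exact Ht.
Qed.

Lemma ricci_diag i j x : U x -> (i < 3)%nat -> (j < 3)%nat ->
  ricci g i j x = RicD g Dh DDh i j x.
Proof.
  intros Hx Hi Hj. unfold ricci, RicD, sum3.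
  repeat rewrite partial_chr by (try assumption; lia).
  repeat rewrite chr_Gam by (try assumption; lia).
  reflexivity.
Qed.
End S.

Definition phid a b c d t := (t-b)*(t-c)*(t-d) + (t-a)*(t-c)*(t-d) + (t-a)*(t-b)*(t-d) + (t-a)*(t-b)*(t-c).
Definition phidd a b c d t := 2*((t-c)*(t-d)+(t-b)*(t-d)+(t-b)*(t-c)+(t-a)*(t-d)+(t-a)*(t-c)+(t-a)*(t-b)).
Definition Sq (y : pt) := sqrt (coord 0 y * coord 1 y * coord 2 y).
Definition Qf p y := 1 + p * Sq y.
Definition hh p a b c d i y := gmet p a b c d i i y.
Definition aL m i y := (dlt m i - dlt m (m3 (i+1))) / (coord i y - coord (m3 (i+1)) y)
  + (dlt m i - dlt m (m3 (i+2))) / (coord i y - coord (m3 (i+2)) y).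
Definition T1 p n y := - (p * Sq y) / (coord n y * Qf p y).
Definition Phr a b c d i y := phid a b c d (coord i y) / phi a b c d (coord i y).
Definition LL p a b c d m i y := T1 p m y + aL m i y - dlt m i * Phr a b c d i y.
Definition DhS p a b c d m i y := hh p a b c d i y * LL p a b c d m i y.
Definition M1 p m n y := - (p * Sq y) / (2 * coord m y * coord n y * Qf p y ^ 2)
   + dlt m n * (p * Sq y) / (coord n y ^ 2 * Qf p y).
Definition M2 m n i y :=
  - ((dlt n i - dlt n (m3 (i+1))) * (dlt m i - dlt m (m3 (i+1))) / (coord i y - coord (m3 (i+1)) y) ^ 2
     + (dlt n i - dlt n (m3 (i+2))) * (dlt m i - dlt m (m3 (i+2))) / (coord i y - coord (m3 (i+2)) y) ^ 2).
Definition M3 a b c d i y := phidd a b c d (coord i y) / phi a b c d (coord i y)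
       - (phid a b c d (coord i y)) ^ 2 / (phi a b c d (coord i y)) ^ 2.
Definition MM p a b c d m n i y := M1 p m n y + M2 m n i y - dlt n i * (dlt m i * M3 a b c d i y).
Definition DDhS p a b c d m n i y := hh p a b c d i y * (LL p a b c d m i y * LL p a b c d n i y + MM p a b c d m n i y).

Lemma prod_pos_nz u v w : 0 < u*v*w -> u <> 0 /\ v <> 0 /\ w <> 0.
Proof. intros H; repeat split; intro; subst; lra. Qed.

Ltac nzt := match goal with
 | |- _ /\ _ => split; nzt
 | |- True => exact I
 | |- _ => first [assumption | (unfold Rminus in *; assumption)
             | (apply Rmult_integral_contrapositive_currified; nzt) | lra ]
 end.

Ltac sq_elim u v w :=
  let s := fresh "s" in let Es := fresh "Es" in
  remember (sqrt (u*v*w)) as s eqn:Es;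
  let Hss := fresh in
  assert (Hss : s * s = u*v*w) by (subst s; apply sqrt_sqrt; lra);
  let Hsp := fresh in
  assert (Hsp : 0 < s) by (subst s; apply sqrt_lt_R0; lra);
  let Hs0 := fresh in assert (Hs0 : s <> 0) by (apply Rgt_not_eq; exact Hsp);
  let Hw := fresh in
  assert (Hw : w = s*s/(u*v)) by (rewrite Hss; field; split; assumption);
  clear Es; subst w.


Lemma nzL1 u v Z k : u <> 0 -> v <> 0 -> Z / (u*v) - k <> 0 -> Z - k * (u*v) <> 0.
Proof. intros H0 H1 H2 Hc. apply H2. replace (Z/(u*v) - k) with ((Z - k*(u*v))/(u*v)) by (field; auto). rewrite Hc. unfold Rdiv; ring. Qed.
Lemma nzL2 u v Z k : u <> 0 -> v <> 0 -> k - Z / (u*v) <> 0 -> k * (u*v) - Z <> 0.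
Proof. intros H0 H1 H2 Hc. apply H2. replace (k - Z/(u*v)) with ((k*(u*v) - Z)/(u*v)) by (field; auto). rewrite Hc. unfold Rdiv; ring. Qed.

Ltac nzf := match goal with
 | |- _ /\ _ => split; nzf
 | |- True => exact I
 | |- _ => first [assumption
    | (apply nzL1; [assumption | assumption | assumption])
    | (apply nzL2; [assumption | assumption | assumption]) ]
 end.

Lemma fac4 t a b c d : (t - a) * (t - b) * (t - c) * (t - d) <> 0 ->
  t - a <> 0 /\ t - b <> 0 /\ t - c <> 0 /\ t - d <> 0.
Proof. intros H; repeat split; intro Hc; apply H; rewrite Hc; ring. Qed.

Ltac prep2 u v w D01 D02 D12 :=
  assert (u - v <> 0) by (apply Rminus_eq_contra; auto);
  assert (v - u <> 0) by (apply Rminus_eq_contra; auto);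
  assert (u - w <> 0) by (apply Rminus_eq_contra; auto);
  assert (w - u <> 0) by (apply Rminus_eq_contra; auto);
  assert (v - w <> 0) by (apply Rminus_eq_contra; auto);
  assert (w - v <> 0) by (apply Rminus_eq_contra; auto).

Ltac prep u v w F0 F1 F2 D01 D02 D12 :=
  destruct (fac4 _ _ _ _ _ F0) as [? [? [? ?]]];
  destruct (fac4 _ _ _ _ _ F1) as [? [? [? ?]]];
  destruct (fac4 _ _ _ _ _ F2) as [? [? [? ?]]];
  assert (u - v <> 0) by (apply Rminus_eq_contra; auto);
  assert (v - u <> 0) by (apply Rminus_eq_contra; auto);
  assert (u - w <> 0) by (apply Rminus_eq_contra; auto);
  assert (w - u <> 0) by (apply Rminus_eq_contra; auto);
  assert (v - w <> 0) by (apply Rminus_eq_contra; auto);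
  assert (w - v <> 0) by (apply Rminus_eq_contra; auto).

Lemma HD_spec p a b c d u v w m i : (m < 3)%nat -> (i < 3)%nat ->
  0 < u * v * w -> 1 + p * sqrt (u*v*w) <> 0 ->
  phi a b c d u <> 0 -> phi a b c d v <> 0 -> phi a b c d w <> 0 ->
  u <> v -> u <> w -> v <> w ->
  is_derive (fun t => gmet p a b c d i i (upd m (u,v,w) t)) (coord m (u,v,w)) (DhS p a b c d m i (u,v,w)).
Proof.
  intros Hm Hi Hp HQ F0 F1 F2 D01 D02 D12.
  destruct (prod_pos_nz _ _ _ Hp) as [Nu [Nv Nw]].
  unfold phi in F0, F1, F2. prep u v w F0 F1 F2 D01 D02 D12.
  destruct m as [|[|[|m]]]; try lia; destruct i as [|[|[|i]]]; try lia;
  unfold DhS, LL, T1, Phr, aL, hh, gmet, confactor, Qf, Sq, phi, phid, dlt, m3; cbn [Nat.eqb Nat.modulo Nat.add coord upd fst snd Nat.divmod Nat.sub];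
  (auto_derive; [nzt | unfold confactor, Sq, Qf; cbn [coord fst snd]; sq_elim u v w; field; nzf]).
Qed.


Lemma dT1 p u v w m n : (m < 3)%nat -> (n < 3)%nat ->
  0 < u * v * w -> 1 + p * sqrt (u*v*w) <> 0 ->
  is_derive (fun t => T1 p n (upd m (u,v,w) t)) (coord m (u,v,w)) (M1 p m n (u,v,w)).
Proof.
  intros Hm Hn Hp HQ.
  destruct (prod_pos_nz _ _ _ Hp) as [Nu [Nv Nw]].
  destruct m as [|[|[|m]]]; try lia; destruct n as [|[|[|n]]]; try lia;
  unfold T1, M1, Qf, Sq, dlt; cbn [Nat.eqb coord upd fst snd];
  (auto_derive; [nzt | sq_elim u v w; field; nzf]).
Qed.

Lemma daL u v w m n i : (m < 3)%nat -> (n < 3)%nat -> (i < 3)%nat ->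
  u <> v -> u <> w -> v <> w ->
  is_derive (fun t => aL n i (upd m (u,v,w) t)) (coord m (u,v,w)) (M2 m n i (u,v,w)).
Proof.
  intros Hm Hn Hi D01 D02 D12. prep2 u v w D01 D02 D12.
  destruct m as [|[|[|m]]]; try lia; destruct n as [|[|[|n]]]; try lia; destruct i as [|[|[|i]]]; try lia;
  unfold aL, M2, dlt, m3; cbn [Nat.eqb Nat.modulo Nat.add coord upd fst snd Nat.divmod Nat.sub];
  (auto_derive; [nzt | field; nzf]).
Qed.

Lemma dphi a b c d t : is_derive (phi a b c d) t (phid a b c d t).
Proof. unfold phi, phid. auto_derive; [exact I | ring]. Qed.
Lemma dphid a b c d t : is_derive (phid a b c d) t (phidd a b c d t).
Proof. unfold phidd, phid. auto_derive; [exact I | ring]. Qed.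

Lemma dPhr a b c d y m n i : (m < 3)%nat -> (i < 3)%nat -> phi a b c d (coord i y) <> 0 ->
  is_derive (fun t => dlt n i * Phr a b c d i (upd m y t)) (coord m y)
     (dlt n i * (dlt m i * M3 a b c d i y)).
Proof.
  intros Hm Hi HF. apply is_derive_scal.
  unfold dlt. destruct (Nat.eqb_spec m i).
  - subst. unfold Phr.
    assert (E : forall t, coord i (upd i y t) = t) by (intros t; destruct y as [[u v] w]; destruct i as [|[|[|i]]]; try lia; reflexivity).
    apply (is_derive_ext (fun t => phid a b c d t / phi a b c d t)).
    { intros t. rewrite E. reflexivity. }
    replace (1 * M3 a b c d i y) with
      ((phidd a b c d (coord i y) * phi a b c d (coord i y) - phid a b c d (coord i y) * phid a b c d (coord i y)) / (phi a b c d (coord i y))^2)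
      by (unfold M3; field; exact HF).
    apply is_derive_div; [apply dphid | apply dphi | exact HF].
  - rewrite Rmult_0_l.
    apply (is_derive_ext (fun _ => Phr a b c d i y)).
    { intros t. unfold Phr. destruct y as [[u v] w]; destruct m as [|[|[|m]]]; try lia;
      destruct i as [|[|[|i]]]; try lia; try congruence; reflexivity. }
    auto_derive; [exact I | ring].
Qed.

Lemma dLL p a b c d u v w m n i : (m < 3)%nat -> (n < 3)%nat -> (i < 3)%nat ->
  0 < u * v * w -> 1 + p * sqrt (u*v*w) <> 0 ->
  phi a b c d u <> 0 -> phi a b c d v <> 0 -> phi a b c d w <> 0 ->
  u <> v -> u <> w -> v <> w ->
  is_derive (fun t => LL p a b c d n i (upd m (u,v,w) t)) (coord m (u,v,w)) (MM p a b c d m n i (u,v,w)).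
Proof.
  intros Hm Hn Hi Hp HQ F0 F1 F2 D01 D02 D12.
  unfold LL, MM.
  apply (is_derive_minus (fun t => T1 p n (upd m (u,v,w) t) + aL n i (upd m (u,v,w) t))
          (fun t => dlt n i * Phr a b c d i (upd m (u,v,w) t))).
  - apply (is_derive_plus (fun t => T1 p n (upd m (u,v,w) t)) (fun t => aL n i (upd m (u,v,w) t))).
    + apply dT1; auto.
    + apply daL; auto.
  - apply dPhr; auto.
    destruct i as [|[|[|i]]]; try lia; assumption.
Qed.

Lemma HDD_spec p a b c d u v w m n i : (m < 3)%nat -> (n < 3)%nat -> (i < 3)%nat ->
  0 < u * v * w -> 1 + p * sqrt (u*v*w) <> 0 ->
  phi a b c d u <> 0 -> phi a b c d v <> 0 -> phi a b c d w <> 0 ->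
  u <> v -> u <> w -> v <> w ->
  is_derive (fun t => DhS p a b c d n i (upd m (u,v,w) t)) (coord m (u,v,w)) (DDhS p a b c d m n i (u,v,w)).
Proof.
  intros Hm Hn Hi Hp HQ F0 F1 F2 D01 D02 D12.
  unfold DhS.
  pose proof (Derive.is_derive_mult (fun t => hh p a b c d i (upd m (u,v,w) t))
     (fun t => LL p a b c d n i (upd m (u,v,w) t)) _ _ _
     (HD_spec p a b c d u v w m i Hm Hi Hp HQ F0 F1 F2 D01 D02 D12)
     (dLL p a b c d u v w m n i Hm Hn Hi Hp HQ F0 F1 F2 D01 D02 D12)) as P.
  cbv beta in P. rewrite !upd_coord in P by lia.
  unfold DDhS. replace (hh p a b c d i (u, v, w) * (LL p a b c d m i (u, v, w) * LL p a b c d n i (u, v, w) + MM p a b c d m n i (u, v, w)))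
    with (DhS p a b c d m i (u, v, w) * LL p a b c d n i (u, v, w) + hh p a b c d i (u, v, w) * MM p a b c d m n i (u, v, w))
    by (unfold DhS; ring).
  exact P.
Qed.

Definition e1 a b c d := a + b + c + d.
Definition e2 a b c d := a*b + a*c + a*d + b*c + b*d + c*d.
Definition e3 a b c d := a * b * c + a * b * d + a * c * d + b * c * d.
Definition e4 a b c d := a * b * c * d.
Lemma phi_e a b c d t : phi a b c d t = t^4 - e1 a b c d * t^3 + e2 a b c d * t^2 - e3 a b c d * t + e4 a b c d.
Proof. unfold phi, e1, e2, e3, e4. ring. Qed.
Lemma phid_e a b c d t : phid a b c d t = 4*t^3 - 3*e1 a b c d * t^2 + 2*e2 a b c d * t - e3 a b c d.
Proof. unfold phid, e1, e2, e3, e4. ring. Qed.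
Lemma phidd_e a b c d t : phidd a b c d t = 12*t^2 - 6*e1 a b c d * t + 2*e2 a b c d.
Proof. unfold phidd, e1, e2, e3, e4. ring. Qed.

Definition Brk p a b c d i y :=
  (p^2 * e3 a b c d - 1)/2 - e4 a b c d * (p * Sq y) *
   ((1 + p * Sq y)/(4 * (coord 0 y * coord 1 y * coord 2 y) * coord i y)
    + (1 + 3 * (p * Sq y))/(4 * (coord 0 y * coord 1 y * coord 2 y)) * (1/coord 0 y + 1/coord 1 y + 1/coord 2 y)).

Lemma p2_T p u v w : 0 < u*v*w -> p^2 = (p * sqrt (u*v*w))^2/(u*v*w).
Proof. intros H. rewrite Rpow_mult_distr. rewrite <- Rsqr_pow2 with (x := sqrt _). rewrite Rsqr_sqrt by lra. destruct (prod_pos_nz _ _ _ H) as [? [? ?]]. field. auto. Qed.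


Ltac ricprep p a b c d u v w Hp HQ F0 F1 F2 D01 D02 D12 :=
  destruct (prod_pos_nz _ _ _ Hp) as [Nu [Nv Nw]];
  prep2 u v w D01 D02 D12;
  unfold RicD, dGam, Gam, sum3, Brk;
  unfold DDhS, DhS, MM, M1, M2, M3, LL, T1, Phr, aL, hh, gmet, confactor, Qf, Sq, dlt, m3;
  cbn [Nat.eqb Nat.modulo Nat.add coord upd fst snd Nat.divmod Nat.sub];
  rewrite <- ?Ropp_mult_distr_l;
  try rewrite (p2_T p u v w Hp);
  rewrite ?phid_e, ?phidd_e, ?phi_e; rewrite phi_e in F0, F1, F2;
  revert HQ; generalize (p * sqrt (u*v*w)); intros T HQ;
  revert F0 F1 F2;
  generalize (e1 a b c d) (e2 a b c d) (e3 a b c d) (e4 a b c d); intros;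
  lazymatch goal with |- context[sqrt] => fail "sqrt left" | _ => idtac end.

Lemma Roff p a b c d u v w i j : (i < 3)%nat -> (j < 3)%nat -> i <> j ->
  0 < u * v * w -> 1 + p * sqrt (u*v*w) <> 0 ->
  phi a b c d u <> 0 -> phi a b c d v <> 0 -> phi a b c d w <> 0 ->
  u <> v -> u <> w -> v <> w ->
  RicD (gmet p a b c d) (DhS p a b c d) (DDhS p a b c d) i j (u,v,w) = 0.
Proof.
  intros Hi Hj Hij Hp HQ F0 F1 F2 D01 D02 D12.
  destruct (prod_pos_nz _ _ _ Hp) as [Nu [Nv Nw]].
  prep2 u v w D01 D02 D12.
  destruct i as [|[|[|i]]]; try lia; destruct j as [|[|[|j]]]; try lia;
  unfold RicD, dGam, Gam, sum3;
  unfold DDhS, DhS, MM, M1, M2, M3, LL, T1, Phr, aL, hh, gmet, confactor, Qf, Sq, dlt, m3;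
  cbn [Nat.eqb Nat.modulo Nat.add coord upd fst snd Nat.divmod Nat.sub];
  rewrite <- ?Ropp_mult_distr_l;
  generalize (phid a b c d u) (phid a b c d v) (phid a b c d w) (phidd a b c d u) (phidd a b c d v) (phidd a b c d w);
  revert HQ; generalize (p * sqrt (u*v*w)); intros T HQ;
  revert F0 F1 F2; generalize (phi a b c d u) (phi a b c d v) (phi a b c d w); intros;
  lazymatch goal with |- context[sqrt] => fail "sqrt left" | _ => idtac end;
  field; nzf.
Qed.


Definition halpha a b c d t0 t1 :=
  (phi a b c d t1 - phi a b c d t0 - phid a b c d t0 * (t1 - t0)) / (t1 - t0)^2.
Definition hbeta a b c d t0 t1 t2 :=
  (phi a b c d t2 - phi a b c d t0 - phid a b c d t0 * (t2 - t0) - halpha a b c d t0 t1 * (t2 - t0)^2)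
   / ((t2 - t0)^2 * (t2 - t1)).

Lemma herm a b c d t0 t1 t2 : t0 - t1 <> 0 -> t0 - t2 <> 0 -> t1 - t2 <> 0 ->
  let D0 := phid a b c d t0 in let al := halpha a b c d t0 t1 in let be := hbeta a b c d t0 t1 t2 in
  phid a b c d t1 = (t1-t0)^2*(t1-t2) + D0 + 2*al*(t1-t0) + be*(t1-t0)^2 /\
  phid a b c d t2 = (t2-t0)^2*(t2-t1) + D0 + 2*al*(t2-t0) + be*(2*(t2-t0)*(t2-t1) + (t2-t0)^2) /\
  phidd a b c d t0 = 2*(t0-t1)*(t0-t2) + 2*al + 2*be*(t0-t1) /\
  e4 a b c d = t0^2*t1*t2 + phi a b c d t0 - D0*t0 + al*t0^2 - be*t0^2*t1 /\
  e3 a b c d = 2*t0*t1*t2 + t0^2*(t1+t2) - D0 + 2*al*t0 - be*(2*t0*t1 + t0^2).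
Proof.
  intros H01 H02 H12.
  assert (H10 : t1 - t0 <> 0) by (intro; apply H01; lra).
  assert (H20 : t2 - t0 <> 0) by (intro; apply H02; lra).
  assert (H21 : t2 - t1 <> 0) by (intro; apply H12; lra).
  cbv zeta. unfold hbeta, halpha, phi, phid, phidd, e3, e4.
  repeat split; field; repeat split; auto.
Qed.

Ltac ricprep2 p a b c d u v w t0 t1 t2 Hp HQ F0 F1 F2 D01 D02 D12 :=
  destruct (prod_pos_nz _ _ _ Hp) as [Nu [Nv Nw]];
  prep2 u v w D01 D02 D12;
  let E1 := fresh in let E2 := fresh in let E3 := fresh in let E4 := fresh in let E5 := fresh in
  destruct (herm a b c d t0 t1 t2 ltac:(assumption) ltac:(assumption) ltac:(assumption)) as [E1 [E2 [E3 [E4 E5]]]];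
  unfold RicD, dGam, Gam, sum3, Brk;
  unfold DDhS, DhS, MM, M1, M2, M3, LL, T1, Phr, aL, hh, gmet, confactor, Qf, Sq, dlt, m3;
  cbn [Nat.eqb Nat.modulo Nat.add coord upd fst snd Nat.divmod Nat.sub];
  rewrite <- ?Ropp_mult_distr_l;
  rewrite (p2_T p u v w Hp);
  rewrite E1, E2, E3, E4, E5; clear E1 E2 E3 E4 E5;
  unfold hbeta, halpha;
  revert HQ; generalize (p * sqrt (u*v*w)); intros T HQ;
  generalize (phidd a b c d t1) (phidd a b c d t2) (phid a b c d t0);
  revert F0 F1 F2; generalize (phi a b c d u) (phi a b c d v) (phi a b c d w); intros;
  lazymatch goal with |- context[sqrt] => fail "sqrt left" | _ => idtac end;
  lazymatch goal with |- context[phi] => fail "phi left" | _ => idtac end;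
  lazymatch goal with |- context[phid] => fail "phid left" | _ => idtac end.

Lemma Rdiag0 p a b c d u v w :
  0 < u * v * w -> 1 + p * sqrt (u*v*w) <> 0 ->
  phi a b c d u <> 0 -> phi a b c d v <> 0 -> phi a b c d w <> 0 ->
  u <> v -> u <> w -> v <> w ->
  RicD (gmet p a b c d) (DhS p a b c d) (DDhS p a b c d) 0%nat 0%nat (u,v,w) =
  gmet p a b c d 0%nat 0%nat (u,v,w) * Brk p a b c d 0%nat (u,v,w).
Proof.
  intros Hp HQ F0 F1 F2 D01 D02 D12.
  ricprep2 p a b c d u v w u v w Hp HQ F0 F1 F2 D01 D02 D12.
  field.
  nzf.
Qed.

Lemma Rdiag p a b c d u v w i : (i < 3)%nat ->
  0 < u * v * w -> 1 + p * sqrt (u*v*w) <> 0 ->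
  phi a b c d u <> 0 -> phi a b c d v <> 0 -> phi a b c d w <> 0 ->
  u <> v -> u <> w -> v <> w ->
  RicD (gmet p a b c d) (DhS p a b c d) (DDhS p a b c d) i i (u,v,w) =
  gmet p a b c d i i (u,v,w) * Brk p a b c d i (u,v,w).
Proof.
  intros Hi Hp HQ F0 F1 F2 D01 D02 D12.
  destruct i as [|[|[|i]]]; try lia.
  - apply Rdiag0; auto.
  - ricprep2 p a b c d u v w v u w Hp HQ F0 F1 F2 D01 D02 D12. field. nzf.
  - ricprep2 p a b c d u v w w u v Hp HQ F0 F1 F2 D01 D02 D12. field. nzf.
Qed.

Lemma adm_pt p a b c d U y : admissible p a b c d U -> U y ->
  exists u v w, y = (u,v,w) /\ 0 < u * v * w /\ 1 + p * sqrt (u*v*w) <> 0 /\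
  phi a b c d u <> 0 /\ phi a b c d v <> 0 /\ phi a b c d w <> 0 /\
  u <> v /\ u <> w /\ v <> w.
Proof.
  intros [_ [_ H]] Hy. destruct (H y Hy) as [H1 [H2 [H3 [H4 [H5 H6]]]]].
  destruct y as [[u v] w]. exists u, v, w. cbn in *.
  pose proof (H3 0%nat ltac:(lia)). pose proof (H3 1%nat ltac:(lia)). pose proof (H3 2%nat ltac:(lia)).
  cbn in *. repeat split; auto.
Qed.

Lemma diag_hyp p a b c d U : admissible p a b c d U ->
  DiagHyp (gmet p a b c d) (DhS p a b c d) (DDhS p a b c d) U.
Proof.
  intros HA. constructor.
  - exact (proj1 HA).
  - intros i j y Hij. unfold gmet. destruct (Nat.eqb_spec i j); [contradiction | reflexivity].
  - intros y Hy i Hi. destruct (adm_pt _ _ _ _ _ _ _ HA Hy) as [u [v [w [-> [Hp [HQ [F0 [F1 [F2 [D01 [D02 D12]]]]]]]]]]].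
    unfold gmet, confactor. rewrite Nat.eqb_refl.
    apply Rmult_integral_contrapositive_currified.
    + apply Rinv_neq_0_compat. apply pow_nonzero. exact HQ.
    + destruct i as [|[|[|i]]]; try lia; unfold m3; cbn;
      unfold Rdiv; repeat apply Rmult_integral_contrapositive_currified;
      try apply Rinv_neq_0_compat; try assumption; apply Rminus_eq_contra; auto.
  - intros y Hy m i Hm Hi. destruct (adm_pt _ _ _ _ _ _ _ HA Hy) as [u [v [w [-> [Hp [HQ [F0 [F1 [F2 [D01 [D02 D12]]]]]]]]]]].
    apply HD_spec; auto.
  - intros y Hy m n i Hm Hn Hi. destruct (adm_pt _ _ _ _ _ _ _ HA Hy) as [u [v [w [-> [Hp [HQ [F0 [F1 [F2 [D01 [D02 D12]]]]]]]]]]].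
    apply HDD_spec; auto.
Qed.

Theorem proposition3 (p a b c d : R) (U : pt -> Prop) :
  admissible p a b c d U ->
  (forall i j : nat, (i < 3)%nat -> (j < 3)%nat -> i <> j ->
     forall x, U x -> ricci (gmet p a b c d) i j x = 0) /\
  ((forall i : nat, (i < 3)%nat ->
     forall x, U x -> ricci (gmet p a b c d) i i x = 0) <->
   (p * (a * b * c * d) = 0 /\
    p ^ 2 * (a * b * c + a * b * d + a * c * d + b * c * d) = 1)).
Proof.
  intros HA. pose proof (diag_hyp _ _ _ _ _ _ HA) as HD.
  split.
  - intros i j Hi Hj Hij x Hx.
    rewrite (ricci_diag _ _ _ _ HD i j x Hx Hi Hj).
    destruct (adm_pt _ _ _ _ _ _ _ HA Hx) as [u [v [w [-> [Hp [HQ [F0 [F1 [F2 [D01 [D02 D12]]]]]]]]]]].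
    apply Roff; auto.
  - assert (HR : forall i x, (i < 3)%nat -> U x ->
       ricci (gmet p a b c d) i i x = gmet p a b c d i i x * Brk p a b c d i x).
    { intros i x Hi Hx. rewrite (ricci_diag _ _ _ _ HD i i x Hx Hi Hi).
      destruct (adm_pt _ _ _ _ _ _ _ HA Hx) as [u [v [w [-> [Hp [HQ [F0 [F1 [F2 [D01 [D02 D12]]]]]]]]]]].
      apply Rdiag; auto. }
    split.
    + intros H0.
      destruct HA as [Ho [[x Hx] Hall]].
      pose proof (HR 0%nat x ltac:(lia) Hx) as R0. pose proof (HR 1%nat x ltac:(lia) Hx) as R1.
      rewrite (H0 0%nat ltac:(lia) x Hx) in R0. rewrite (H0 1%nat ltac:(lia) x Hx) in R1.
      pose proof (diag_hyp _ _ _ _ _ _ (conj Ho (conj (ex_intro _ x Hx) Hall))) as HD'.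
      pose proof (dh_nz _ _ _ _ HD' x Hx 0%nat ltac:(lia)) as N0.
      pose proof (dh_nz _ _ _ _ HD' x Hx 1%nat ltac:(lia)) as N1.
      assert (B0 : Brk p a b c d 0 x = 0).
      { symmetry in R0. destruct (Rmult_integral _ _ R0); [contradiction | assumption]. }
      assert (B1 : Brk p a b c d 1 x = 0).
      { symmetry in R1. destruct (Rmult_integral _ _ R1); [contradiction | assumption]. }
      destruct (Hall x Hx) as [Hp [HQ [_ [D01 _]]]].
      destruct x as [[u v] w]. cbn in Hp, HQ, D01.
      destruct (prod_pos_nz _ _ _ Hp) as [Nu [Nv Nw]].
      assert (HK : 0 < sqrt (u*v*w)) by (apply sqrt_lt_R0; exact Hp).
      assert (Z : (e4 a b c d * p) * (sqrt (u*v*w) * (1 + p * sqrt (u*v*w)) * (u - v) / (4 * (u*v*w) * u * v))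
         = Brk p a b c d 0 (u,v,w) - Brk p a b c d 1 (u,v,w)).
      { unfold Brk, Sq. cbn [coord fst snd]. field. repeat split; auto. }
      rewrite B0, B1, Rminus_0_r in Z.
      assert (NZ : sqrt (u*v*w) * (1 + p * sqrt (u*v*w)) * (u - v) / (4 * (u*v*w) * u * v) <> 0).
      { unfold Rdiv. repeat apply Rmult_integral_contrapositive_currified; try apply Rinv_neq_0_compat;
        repeat apply Rmult_integral_contrapositive_currified; try lra; auto;
        apply Rminus_eq_contra; auto. }
      destruct (Rmult_integral _ _ Z) as [Z1 | Z1]; [|contradiction].
      assert (Pe : p * (a * b * c * d) = 0) by (unfold e4 in Z1; rewrite <- Z1; ring).
      split; [exact Pe|].
      assert (E : e4 a b c d * (p * sqrt (u*v*w)) = 0) by (unfold e4 in *; rewrite <- (Rmult_0_r (sqrt (u*v*w))), <- Pe; ring).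
      unfold Brk, Sq in B0. cbn [coord fst snd] in B0.
      rewrite E in B0. unfold e3 in B0. lra.
    + intros [Pe P3] i Hi x Hx. rewrite (HR i x Hi Hx).
      replace (Brk p a b c d i x) with 0. { ring. }
      unfold Brk, e3, e4.
      replace (a * b * c * d * (p * Sq x)) with ((p * (a * b * c * d)) * Sq x) by ring.
      rewrite Pe, P3. unfold Rdiv. ring.
Qed.
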